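(* Let $x_1,\dots,x_n\in\mathbb R^d$, with $n\ge d+1$, be such that the $(d+1)\times n$ matrix with columns $\binom{1}{x_1},\dots,\binom{1}{x_n}$ has all maximal minors positive. Let $\pi\in S_n$ be such that the matrix with columns $\binom{1}{x_{\pi(1)}},\dots,\binom{1}{x_{\pi(n)}}$ also has all maximal minors positive. Then the map $x_i\mapsto x_{\pi(i)}$ is a combinatorial automorphism of the polytope $P=\operatorname{conv}(x_1,\dots,x_n)$, i.e. it induces an automorphism of the face lattice of $P$. *)

(* Defs.v *)
From HB Require Import structures.
From mathcomp Require Import all_boot all_order all_algebra all_fingroup.
Set Implicit Arguments. Unset Strict Implicit. Unset Printing Implicit Defensive.
Import Order.TTheory GRing.Theory Num.Theory.
Local Open Scope ring_scope.

Definition dotv (R : realFieldType) (d : nat) (u v : 'rV[R]_d) : R :=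
  \sum_(k < d) u 0 k * v 0 k.

Definition lift_mx (R : realFieldType) (d n : nat) (x : 'I_n -> 'rV[R]_d)
  : 'M[R]_(1 + d, n) :=
  col_mx (const_mx 1) (\matrix_(k < d, j < n) x j 0 k).

Definition all_max_minors_pos (R : realFieldType) (d n : nat)
  (M : 'M[R]_(1 + d, n)) : Prop :=
  forall f : 'I_(1 + d) -> 'I_n,
    (forall i j : 'I_(1 + d), (i < j)%N -> (f i < f j)%N) ->
    0 < \det (colsub f M).

(* S is the set of indices i such that x_i lies on a face of
   P = conv(x_1..x_n); faces are P ∩ {y | c.y = b} for a valid inequality
   c.y <= b of P (c = 0 allowed, giving P itself and the empty face).
   Since P = conv(x), c.y <= b holds on P iff it holds at all x_i. *)
Definition face_index_set (R : realFieldType) (d n : nat)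
  (x : 'I_n -> 'rV[R]_d) (S : {set 'I_n}) : Prop :=
  exists (c : 'rV[R]_d) (b : R),
    (forall i, dotv c (x i) <= b) /\
    (forall i, i \in S <-> dotv c (x i) = b).

(* The map x_i |-> x_{pi i} is a combinatorial automorphism of conv(x):
   it maps faces (identified with their sets of points x_i) exactly onto
   faces, hence induces an automorphism of the face lattice. *)
Definition comb_automorphism (R : realFieldType) (d n : nat)
  (x : 'I_n -> 'rV[R]_d) (pi : 'S_n) : Prop :=
  forall S : {set 'I_n},
    face_index_set x S <-> face_index_set x (pi @: S).

(* Main.v *)
Require Import Defs.
From HB Require Import structures.
From mathcomp Require Import all_boot all_order all_algebra all_fingroup.
From mathcomp Require Import ring lra zify.
Set Implicit Arguments. Unset Strict Implicit.
Import Order.TTheory GRing.Theory Num.Theory.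
Local Open Scope ring_scope.

Section Faces.
Variables (R : realFieldType) (d n : nat).

Lemma sort_cols (f : 'I_(1 + d) -> 'I_n) : injective f ->
  exists g : 'I_(1 + d) -> 'I_n, exists s : 'S_(1 + d),
    (forall i j : 'I_(1 + d), (i < j)%N -> (g i < g j)%N) /\
    forall M : 'M[R]_(1 + d, n), \det (colsub f M) = (-1) ^+ s * \det (colsub g M).
Proof.
move=> finj.
pose s := [tuple f i | i < 1 + d].
pose t := sort_tuple (fun a b : 'I_n => (a <= b)%N) s.
have pst : perm_eq s t by rewrite perm_sym /t /= perm_sort.
case/tuple_permP: pst => p Hp.
have Hf : forall i, f i = tnth t (p i).
  move=> i; rewrite -[f i](tnth_mktuple f) -/s.
  by rewrite (tnth_nth (f i)) Hp -tnth_nth tnth_mktuple.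
exists (tnth t), (p^-1)%g; split.
  move=> i j lij.
  have srt : sorted (fun a b : 'I_n => (a <= b)%N) t.
    by apply: sort_sorted => a b; exact: leq_total.
  have := @sorted_ltn_nth _ (fun a b : 'I_n => (a <= b)%N) (fun b a c => @leq_trans b a c) (f i) t srt.
  move=> /(_ i j); rewrite !inE size_tuple !ltn_ord => /(_ isT isT lij).
  rewrite -!tnth_nth leq_eqVlt => /orP[/eqP E|//].
  have : f ((p^-1)%g i) = f ((p^-1)%g j) by rewrite !Hf !permKV; apply: val_inj.
  move/finj/perm_inj => eij; by rewrite eij ltnn in lij.
move=> M.
have -> : colsub f M = col_perm p (colsub (tnth t) M).
  by apply/matrixP => i j; rewrite !mxE Hf.
by rewrite col_permE det_mulmx det_perm mulrC.
Qed.

Lemma sign_eq (M N : 'M[R]_(1 + d, n)) (f : 'I_(1 + d) -> 'I_n) :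
  all_max_minors_pos M -> all_max_minors_pos N -> injective f ->
  ((0 < \det (colsub f M)) = (0 < \det (colsub f N))) /\ \det (colsub f M) != 0.
Proof.
move=> PM PN finj; have [g [s [gi Hd]]] := @sort_cols f finj.
rewrite !Hd; have := PM g gi; have := PN g gi.
case: (odd_perm s) => /= a b; rewrite ?expr1 ?expr0 ?mul1r ?mulN1r.
  by rewrite !oppr_gt0 !ltNge !le_eqVlt a b !orbT /= oppr_eq0 gt_eqF.
by rewrite a b gt_eqF.
Qed.

Definition Lf (M : 'M[R]_(1 + d, n)) (w : 'rV[R]_(1 + d)) (j : 'I_n) : R :=
  (w *m M) 0 j.

Definition FSw (M : 'M[R]_(1 + d, n)) w (S : {set 'I_n}) :=
  (forall j, 0 <= Lf M w j) /\ (forall j, j \in S <-> Lf M w j = 0).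

Lemma LfE M w (g : 'I_(1 + d) -> 'I_n) i : (w *m colsub g M) 0 i = Lf M w (g i).
Proof. by rewrite mulmx_colsub mxE. Qed.

Lemma solve M (g : 'I_(1 + d) -> 'I_n) (r : 'rV[R]_(1 + d)) :
  \det (colsub g M) != 0 -> exists h, forall i, Lf M h (g i) = r 0 i.
Proof.
move=> nz; exists (r *m invmx (colsub g M)) => i.
rewrite -LfE mulmxKV //; by rewrite unitmxE unitfE.
Qed.

Lemma vanish (Q : 'M[R]_(1 + d)) (u : 'rV[R]_(1 + d)) :
  \det Q != 0 -> u *m Q = 0 -> u = 0.
Proof.
move=> nz uQ; have uU : Q \in unitmx by rewrite unitmxE unitfE.
by rewrite -(mulmxK uU u) uQ mul0mx.
Qed.

Lemma notin_ex (T : {set 'I_n}) : (#|T| < n)%N -> exists k, k \notin T.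
Proof.
move=> lt; have : (0 < #|~: T|)%N.
  have := cardsC T; rewrite card_ord => E; lia.
by case/card_gt0P => k; rewrite inE => kT; exists k.
Qed.

Lemma grow (T : {set 'I_n}) : (#|T| <= d.+1 <= n)%N ->
  exists B : {set 'I_n}, T \subset B /\ #|B| = d.+1.
Proof.
move Em : (d.+1 - #|T|)%N => m; elim: m T Em => [|m IH] T Em /andP[h1 h2].
  by exists T; split => //; lia.
have [k kT] : exists k, k \notin T by apply: notin_ex; lia.
have c1 : #|k |: T| = #|T|.+1 by rewrite cardsU1 kT.
have [B [sB cB]] : exists B : {set 'I_n}, k |: T \subset B /\ #|B| = d.+1.
  by apply: IH; rewrite c1; [lia | apply/andP; split => //; lia].
exists B; split => //; apply: subset_trans sB; exact: subsetUr.
Qed.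

Lemma enum_inj (m : nat) (B : {set 'I_n}) : #|B| = m ->
  exists g : 'I_m -> 'I_n, injective g /\ (forall j, j \in B <-> exists i, g i = j).
Proof.
move=> cB; exists (fun i => enum_val (cast_ord (esym cB) i)); split.
  by move=> i1 i2 /enum_val_inj /cast_ord_inj.
move=> j; split.
  move=> jB; exists (cast_ord cB (enum_rank_in jB j)).
  by rewrite cast_ordK enum_rankK_in.
by case=> i <-; exact: enum_valP.
Qed.

Lemma sub_inj (B : {set 'I_n}) : (d.+1 <= #|B|)%N ->
  exists g : 'I_(1 + d) -> 'I_n, injective g /\ (forall i, g i \in B).
Proof.
move=> le; exists (fun i => enum_val (widen_ord le i)); split.
  by move=> i1 i2 /enum_val_inj [] /val_inj.
by move=> i; exact: enum_valP.
Qed.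

Lemma face_card M w S : all_max_minors_pos M -> FSw M w S ->
  (exists j, j \notin S) -> (#|S| <= d)%N.
Proof.
move=> PM [ge eq] [j jS]; rewrite leqNgt; apply/negP => lt.
have [g [ginj gS]] := sub_inj lt.
have nz := (sign_eq PM PM ginj).2.
have w0 : w = 0.
  apply: (vanish nz); apply/matrixP => a i; rewrite [a]ord1 LfE mxE.
  exact: (eq (g i)).1 (gS i).
have := (eq j).2; rewrite /Lf w0 mul0mx mxE => /(_ erefl).
by rewrite (negbTE jS).
Qed.

Lemma rotate M w S : all_max_minors_pos M -> (d.+1 <= n)%N -> FSw M w S ->
  (#|S| < d)%N ->
  exists w' (S' : {set 'I_n}), FSw M w' S' /\ S \proper S' /\ exists j, j \notin S'.
Proof.
move=> PM hn [ge eq] lt.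
have [k kS] := @notin_ex S ltac:(lia).
have c1 : #|k |: S| = #|S|.+1 by rewrite cardsU1 kS.
have [k' k'S] := @notin_ex (k |: S) ltac:(lia).
pose T := k' |: (k |: S).
have cT : #|T| = #|S|.+2 by rewrite /T cardsU1 k'S c1.
have [B [TB cB]] := @grow T ltac:(apply/andP; split; lia).
have [g [ginj gB]] := enum_inj cB.
have nz := (sign_eq PM PM ginj).2.
have [h hE] := solve (\row_i (if g i == k then 1 else 0 : R)) nz.
have hT : forall j, j \in T -> Lf M h j = (if j == k then 1 else 0).
  move=> j /(subsetP TB) /gB [i <-]; by rewrite hE mxE.
have kT : k \in T by rewrite /T !inE eqxx orbT.
have hk : 0 < Lf M h k by rewrite hT // eqxx ltr01.
pose F j := Lf M w j / Lf M h j.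
case: (@arg_minP _ _ _ k (fun j => 0 < Lf M h j) F hk) => jm hjm minj.
pose t := F jm.
pose w' := w - t *: h.
have Lw' : forall j, Lf M w' j = Lf M w j - t * Lf M h j.
  by move=> j; rewrite /Lf mulmxBl -scalemxAl !mxE.
have t0 : 0 <= t by apply: divr_ge0; [exact: ge | exact: ltW].
have hS : forall s, s \in S -> Lf M h s = 0.
  move=> s sS; rewrite hT; last by rewrite /T !inE sS !orbT.
  by case: eqP => // E; rewrite -E sS in kS.
exists w', [set j | Lf M w' j == 0]; split; [split|split].
- move=> j; rewrite Lw' subr_ge0; case: (ltP 0 (Lf M h j)) => hj.
    by have := minj j hj; rewrite /F -/t ler_pdivlMr.
  by apply: le_trans (ge j); apply: mulr_ge0_le0.
- by move=> j; rewrite inE; split => /eqP.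
- apply/properP; split.
    apply/subsetP => s sS; rewrite inE Lw' hS // mulr0 subr0.
    by apply/eqP; apply/(eq s).1.
  exists jm.
    by rewrite inE Lw' /t /F divfK ?subrr // gt_eqF.
  by apply/negP => /hS E; rewrite E ltxx in hjm.
exists k'; rewrite inE Lw'.
move: k'S; rewrite !inE negb_or => /andP[nk nS].
rewrite hT; last by rewrite /T !inE eqxx.
rewrite (negbTE nk) mulr0 subr0.
by apply/eqP => /(eq k').2; rewrite (negbTE nS).
Qed.

Lemma grow_face M w S : all_max_minors_pos M -> (d.+1 <= n)%N -> FSw M w S ->
  (exists j, j \notin S) ->
  exists (A : {set 'I_n}) w', S \subset A /\ #|A| = d /\ FSw M w' A /\ exists j, j \notin A.
Proof.
move=> PM hn.
move Em : (d - #|S|)%N => m; have : (d - #|S| <= m)%N by rewrite Em.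
clear Em; elim: m w S => [|m IH] w S Em FS ex.
  have := face_card PM FS ex => le.
  by exists S, w; split => //; split => //; lia.
case: (ltnP #|S| d) => cS; last first.
  have := face_card PM FS ex => le.
  by exists S, w; split => //; split => //; lia.
have [w' [S' [FS' [pr ex']]]] := rotate PM hn FS cS.
have [A [w'' [s1 [c2 [F3 e4]]]]] := IH w' S' ltac:(have := proper_card pr; lia) FS' ex'.
exists A, w''; split => //; apply: subset_trans s1; exact: proper_sub.
Qed.

Definition hcol (a : 'I_d -> 'I_n) (j : 'I_n) : 'I_(1 + d) -> 'I_n :=
  fun i => if @unlift (1 + d) ord0 i is Some k then a k else j.

Lemma LfZB M c1 c2 u1 u2 j :
  Lf M (c1 *: u1 - c2 *: u2) j = c1 * Lf M u1 j - c2 * Lf M u2 j.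
Proof. by rewrite /Lf mulmxBl -!scalemxAl !mxE. Qed.

Lemma Lf0 (M : 'M[R]_(1 + d, n)) j : Lf M 0 j = 0.
Proof. by rewrite /Lf mul0mx mxE. Qed.

Lemma LfZ M c u j : Lf M (c *: u) j = c * Lf M u j.
Proof. by rewrite /Lf -!scalemxAl !mxE. Qed.

Lemma LfZD M c u h j : Lf M (c *: u + h) j = c * Lf M u j + Lf M h j.
Proof. by rewrite /Lf mulmxDl -!scalemxAl !mxE. Qed.

Lemma cof M (a : 'I_d -> 'I_n) j0 :
  forall j, \det (colsub (hcol a j) M) =
            Lf M (\row_i cofactor (colsub (hcol a j0) M) i ord0) j.
Proof.
move=> j; rewrite (expand_det_col _ ord0) /Lf mxE.
apply: eq_bigr => i _; rewrite !mxE mulrC /hcol unlift_none; congr (_ * _).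
rewrite /cofactor; congr (_ * \det (row' _ _)).
by apply/matrixP => r k; rewrite !mxE /hcol liftK.
Qed.

Lemma det_rep (M : 'M[R]_(1 + d, n)) (a : 'I_d -> 'I_n) k : \det (colsub (hcol a (a k)) M) = 0.
Proof.
rewrite -det_tr; apply: (@determinant_alternate _ _ _ ord0 (lift ord0 k)).
  exact: neq_lift.
by move=> c; rewrite !mxE /hcol unlift_none liftK.
Qed.

Lemma hcol_inj (a : 'I_d -> 'I_n) j : injective a -> (forall k, a k != j) ->
  injective (hcol a j).
Proof.
move=> ainj nj i1 i2; rewrite /hcol.
case: unliftP => [k1|] ->; case: unliftP => [k2|] -> //.
- by move/ainj => ->.
- by move=> E; have := nj k1; rewrite E eqxx.
- by move=> E; have := nj k2; rewrite E eqxx.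
Qed.

Lemma sameSign (a b : R) : a != 0 -> b != 0 -> (0 < a * b) = ((0 < a) == (0 < b)).
Proof.
move=> na nb.
case: (ltgtP a 0) => ha; last by rewrite ha eqxx in na.
  rewrite nmulr_rgt0 //.
  case: (ltgtP b 0) => hb; last by rewrite hb eqxx in nb.
    all: try by [].
by rewrite pmulr_rgt0.
Qed.

Lemma facet M N w (A : {set 'I_n}) : all_max_minors_pos M -> all_max_minors_pos N ->
  (d.+1 <= n)%N -> #|A| = d -> FSw M w A -> exists u, FSw N u A.
Proof.
move=> PM PN hn cA [ge eq].
have [a [ainj aA]] := enum_inj cA.
have [j0 j0A] := @notin_ex A ltac:(lia).
have nA : forall j, j \notin A -> forall k, a k != j.
  move=> j jA k; apply/eqP => E; move: jA; rewrite (aA j).2 //; by exists k.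
have hinj : forall j, j \notin A -> injective (hcol a j).
  by move=> j jA; apply: hcol_inj => //; exact: nA.
pose D (P : 'M[R]_(1 + d, n)) j := \det (colsub (hcol a j) P).
have DA : forall P j, j \in A -> D P j = 0.
  by move=> P j /(aA j).1 [k <-]; rewrite /D det_rep.
have nz : D M j0 != 0 := (sign_eq PM PM (hinj j0 j0A)).2.
have DM := cof M a j0.
have DN := cof N a j0.
set wM := \row_i cofactor (colsub (hcol a j0) M) i ord0 in DM.
set wN := \row_i cofactor (colsub (hcol a j0) N) i ord0 in DN.
have prop : D M j0 *: w - Lf M w j0 *: wM = 0.
  apply: (vanish nz); apply/matrixP => z i; rewrite [z]ord1 LfE LfZB -DM mxE.
  rewrite /hcol; case: unliftP => [k|] _ /=.
    rewrite (eq (a k)).1; last by apply/(aA (a k)).2; exists k.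
    by rewrite -/(hcol a (a k)) det_rep !mulr0 subrr.
  by rewrite -/(hcol a j0) mulrC subrr.
have propj : forall j, D M j0 * Lf M w j = Lf M w j0 * D M j.
  move=> j; have := congr1 (fun v => Lf M v j) prop.
  by rewrite /= LfZB -DM Lf0 => /eqP; rewrite subr_eq0 => /eqP.
have posw : forall j, j \notin A -> 0 < Lf M w j.
  move=> j jA; rewrite lt_def ge andbT; apply/eqP => /(eq j).2.
  by rewrite (negbTE jA).
exists (D N j0 *: wN); split.
  have key : forall j, 0 <= D N j0 * D N j.
    move=> j; case jA: (j \in A); first by rewrite (DA N j) // mulr0.
    have jA' : j \notin A by rewrite jA.
    have [sj nzj] := sign_eq PM PN (hinj j jA').
    have [sj0 nzj0] := sign_eq PM PN (hinj j0 j0A).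
    have [_ nzNj] := sign_eq PN PM (hinj j jA').
    have [_ nzNj0] := sign_eq PN PM (hinj j0 j0A).
    apply: ltW; rewrite sameSign // -sj -sj0.
    have := propj j => E.
    have e1 : (0 < D M j0) = (0 < D M j0 * Lf M w j) by rewrite pmulr_lgt0 // posw.
    have e2 : (0 < D M j) = (0 < Lf M w j0 * D M j) by rewrite pmulr_rgt0 // posw.
    by rewrite /D in e1 e2 E *; rewrite e1 e2 E.
  by move=> j; rewrite LfZ -DN; exact: key j.
move=> j; rewrite LfZ -DN; split; first by move=> jA; have := DA N j jA; rewrite /D => ->; rewrite mulr0.
move=> E; apply/negPn/negP => jA.
have [_ nzNj] := sign_eq PN PM (hinj j jA).
have [_ nzNj0] := sign_eq PN PM (hinj j0 j0A).
by move/eqP: E; rewrite mulf_eq0 (negbTE nzNj) (negbTE nzNj0).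
Qed.

Lemma down N u (A S : {set 'I_n}) : all_max_minors_pos N -> (d.+1 <= n)%N ->
  #|A| = d -> FSw N u A -> S \subset A -> exists w, FSw N w S.
Proof.
move=> PN hn cA [ge eq] SA.
have [B [AB cB]] := @grow A ltac:(apply/andP; split; lia).
have [g [ginj gB]] := enum_inj cB.
have nz := (sign_eq PN PN ginj).2.
have [h hE] := solve (\row_i (if g i \in S then 0 else 1 : R)) nz.
have hA : forall j, j \in A -> Lf N h j = (if j \in S then 0 else 1).
  move=> j /(subsetP AB) /gB [i <-]; by rewrite hE mxE.
pose K := 1 + \sum_j `|Lf N h j| / Lf N u j.
have Kj : forall j, 1 + `|Lf N h j| / Lf N u j <= K.
  move=> j; rewrite lerD2l (bigD1 j) //= lerDl; apply: sumr_ge0 => i _.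
  by apply: divr_ge0; [exact: normr_ge0 | exact: ge].
have pos : forall j, j \notin S -> 0 < Lf N (K *: u + h) j.
  move=> j jS; rewrite LfZD; case jA: (j \in A).
    by rewrite (eq j).1 // hA // (negbTE jS) mulr0 add0r ltr01.
  have uj : 0 < Lf N u j.
    rewrite lt_def ge andbT; apply/eqP => /(eq j).2; by rewrite jA.
  have : (1 + `|Lf N h j| / Lf N u j) * Lf N u j <= K * Lf N u j.
    by apply: ler_wpM2r; [exact: ltW | exact: Kj].
  rewrite mulrDl mul1r divfK ?gt_eqF // => H.
  have := lerNnormlW (lexx `|Lf N h j|) => H2.
  lra.
exists (K *: u + h); split.
  move=> j; case jS: (j \in S); last by apply: ltW; apply: pos; rewrite jS.
  have jA : j \in A by apply: (subsetP SA).
  by rewrite LfZD (eq j).1 // hA // jS mulr0 addr0.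
move=> j; split.
  move=> jS; have jA : j \in A by apply: (subsetP SA).
  by rewrite LfZD (eq j).1 // hA // jS mulr0 addr0.
move=> E; apply/negPn/negP => /pos; by rewrite E ltxx.
Qed.

Definition FS (M : 'M[R]_(1 + d, n)) (S : {set 'I_n}) := exists w, FSw M w S.

Lemma transfer M N S : all_max_minors_pos M -> all_max_minors_pos N ->
  (d.+1 <= n)%N -> FS M S -> FS N S.
Proof.
move=> PM PN hn [w FSM].
case: (boolP [exists j, j \notin S]) => [/existsP ex|/existsPn all].
  have [A [w' [SA [cA [FA _]]]]] := grow_face PM hn FSM ex.
  have [u Fu] := facet PM PN hn cA FA.
  exact: down PN hn cA Fu SA.
exists 0; split => j; rewrite Lf0 //; split => // _.
by have := all j; rewrite negbK.
Qed.

End Faces.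

Lemma Lf_lift (R : realFieldType) (d n : nat) (x : 'I_n -> 'rV[R]_d)
  (b : R) (c : 'rV[R]_d) j :
  Lf (lift_mx x) (row_mx (const_mx b : 'M_(1, 1)) (- c)) j = b - dotv c (x j).
Proof.
rewrite /Lf mxE big_split_ord big_ord1 /lift_mx.
rewrite row_mxEl col_mxEu !mxE mulr1; congr (_ + _).
rewrite /dotv -sumrN; apply: eq_bigr => k _.
by rewrite row_mxEr col_mxEd !mxE mulNr.
Qed.

Lemma face_FS (R : realFieldType) (d n : nat) (x : 'I_n -> 'rV[R]_d) S :
  face_index_set x S <-> FS (lift_mx x) S.
Proof.
split.
  move=> [c [b [le eqS]]]; exists (row_mx (const_mx b : 'M_(1, 1)) (- c)); split.
    by move=> j; rewrite Lf_lift subr_ge0.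
  move=> j; rewrite Lf_lift (eqS j); split; first by move=> ->; rewrite subrr.
  by move/eqP; rewrite subr_eq0 => /eqP.
move=> [w [ge eq]].
have wE : w = row_mx (const_mx (lsubmx w 0 0) : 'M_(1, 1)) (- (- rsubmx w)).
  rewrite opprK -{1}(hsubmxK w); f_equal.
  by apply/matrixP => i k; rewrite [in RHS]mxE [i]ord1 [k]ord1.
rewrite /face_index_set; exists (- rsubmx w), (lsubmx w 0 0); split.
  move=> i; have := ge i. rewrite {1}wE Lf_lift. by rewrite subr_ge0.
move=> i; rewrite (eq i) {1}wE Lf_lift; split.
  by move=> h; apply/eqP; rewrite eq_sym -subr_eq0 h.
by move=> ->; rewrite subrr.
Qed.

Lemma perm_FS (R : realFieldType) (d n : nat) (M : 'M[R]_(1 + d, n)) (pi : 'S_n) S :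
  FS (colsub pi M) S <-> FS M (pi @: S).
Proof.
have LE : forall w j, Lf (colsub pi M) w j = Lf M w (pi j).
  by move=> w j; rewrite /Lf mulmx_colsub mxE.
have memE : forall j, (pi j \in pi @: S) = (j \in S).
  by move=> j; rewrite mem_imset //; exact: perm_inj.
split.
  move=> [w [ge eq]]; exists w; split.
    by move=> j; rewrite -(permKV pi j) -LE.
  by move=> j; rewrite -(permKV pi j) memE -LE.
move=> [w [ge eq]]; exists w; split.
  by move=> j; rewrite LE.
by move=> j; rewrite LE -memE.
Qed.

Unset Implicit Arguments.
Set Strict Implicit.

Theorem corollary3p5 (R : realFieldType) (d n : nat) (x : 'I_n -> 'rV[R]_d)
  (pi : 'S_n) :
  (d.+1 <= n)%N ->
  all_max_minors_pos (lift_mx x) ->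
  all_max_minors_pos (colsub pi (lift_mx x)) ->
  comb_automorphism x pi.
Proof.
move=> hn P1 P2 S.
rewrite face_FS face_FS -perm_FS.
by split; apply: transfer.
Qed.
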